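(* Let either $n\ge 3$ and $k\ge 4$, or $n\ge 4$ and $k=3$. Let $\alpha=a_1\cdots a_n\in\mathbf{A}_k(n)\setminus\{r_{n,k}\}$ be such that $\mathrm{LastNonMax}(\alpha)\notin\mathbf{A}_k(n)$ and $\mathrm{LastSymbol}(\alpha)\notin\mathbf{A}_k(n)$. If $k\ge 4$, then $\mathrm{FirstNonMin}(\alpha)\in\mathbf{A}_k(n)$. If $k=3$ and $\mathrm{FirstNonMin}(\alpha)\notin\mathbf{A}_3(n)$, then $\alpha=0\gamma 012$ for some palindrome $\gamma$, and $\mathrm{SecondLastNonMax}(\alpha)\in\mathbf{A}_3(n)$.
   Context: Let $\Sigma=\{0,1,\dots,k-1\}$. Strings are compared lexicographically ($\alpha<\beta$ if $\alpha$ is a proper prefix of $\beta$, or $\alpha$ has the smaller symbol at the first index where they differ). For $\alpha=a_1\cdots a_n$, $\alpha^R=a_n\cdots a_1$; $\alpha$ is a palindrome if $\alpha=\alpha^R$; $[\alpha]$ is the set of rotations of $\alpha$. $\alpha$ is a necklace if it is the lexicographically smallest element of $[\alpha]$; a bracelet if it is the lexicographically smallest element of $[\alpha]\cup[\alpha^R]$. A necklace $\alpha$ is symmetric if $\alpha^R\in[\alpha]$, asymmetric otherwise. $\mathbf{A}_k(n)$ is the set of asymmetric bracelets of length $n$ over $\Sigma$. $r_{n,k}=0^{n-2}(k-2)(k-1)$. Operations on $\alpha=a_1\cdots a_n$: $\mathrm{LastNonMax}(\alpha)=a_1\cdots a_{j-1}(a_j+1)(k-1)^{n-j}$, where $j$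 is the index of the last symbol different from $k-1$; $\mathrm{LastSymbol}(\alpha)$ is the necklace (smallest rotation) of $a_1\cdots a_{n-1}((a_n+1)\bmod k)$; $\mathrm{FirstNonMin}(\alpha)=0^{i-1}(a_i-1)a_{i+1}\cdots a_n$, where $i$ is the index of the first nonzero symbol; $\mathrm{SecondLastNonMax}(\alpha)=a_1\cdots a_{\ell-1}(a_\ell+1)a_{\ell+1}\cdots a_n$, where $\ell$ is the index of the second-last symbol different from $k-1$. *)

(* Defs.v *)
(* Strings over {0,...,k-1} are represented as seq nat
   whose entries are all < k; indices below are 0-based. *)
From mathcomp Require Import all_boot.
Set Implicit Arguments. Unset Strict Implicit. Unset Printing Implicit Defensive.

Fixpoint lexle (s t : seq nat) : bool :=
  match s, t with
  | [::], _ => true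
  | _ :: _, [::] => false
  | a :: s', b :: t' => (a < b) || ((a == b) && lexle s' t')
  end.

Definition rotations (s : seq nat) : seq (seq nat) :=
  [seq rot i s | i <- iota 0 (size s)].

Definition is_necklace (s : seq nat) : bool :=
  all (fun t => lexle s t) (rotations s).

Definition is_bracelet (s : seq nat) : bool :=
  all (fun t => lexle s t) (rotations s ++ rotations (rev s)).

Definition is_symmetric (s : seq nat) : bool := rev s \in rotations s.

Definition inA (k n : nat) (s : seq nat) : bool :=
  [&& size s == n, all (fun a => a < k) s, is_bracelet s & ~~ is_symmetric s].

Definition rnk (n k : nat) : seq nat := nseq (n - 2) 0 ++ [:: k - 2; k - 1].

Definition neck (s : seq nat) : seq nat :=
  foldl (fun m t => if lexle t m then t else m) s (rotations s).

Definition nonmax_idx (k : nat) (s : seq nat) : seq nat :=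
  [seq i <- iota 0 (size s) | nth 0 s i != k - 1].

Definition LastNonMax (k : nat) (s : seq nat) : seq nat :=
  let j := last 0 (nonmax_idx k s) in
  take j s ++ (nth 0 s j).+1 :: nseq (size s - j.+1) (k - 1).

Definition LastSymbol (k : nat) (s : seq nat) : seq nat :=
  neck (take (size s).-1 s ++ [:: (nth 0 s (size s).-1).+1 %% k]).

Definition FirstNonMin (s : seq nat) : seq nat :=
  let i := find (fun a => a != 0) s in
  nseq i 0 ++ (nth 0 s i).-1 :: drop i.+1 s.

Definition SecondLastNonMax (k : nat) (s : seq nat) : seq nat :=
  let idx := nonmax_idx k s in
  let l := nth 0 idx (size idx - 2) in
  take l s ++ (nth 0 s l).+1 :: drop l.+1 s.

(* Main.v *)
Require Import Defs.
From mathcomp Require Import all_boot.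
From mathcomp Require Import zify.
Set Implicit Arguments. Unset Strict Implicit. Unset Printing Implicit Defensive.

Lemma lexle_refl s : lexle s s.
Proof. by elim: s => //= a s ->; rewrite eqxx orbT. Qed.

Lemma lexle_nth s t i : size s = size t -> lexle s t ->
  (forall l, l < i -> nth 0 s l = nth 0 t l) -> i < size s -> nth 0 s i <= nth 0 t i.
Proof.
elim: s t i => [|a s IH] [|b t] i //= [Hs] H Hp Hi.
case: i Hp Hi => [|i] Hp Hi /=.
  by case/orP: H => [/ltnW|/andP[/eqP-> _]].
have Hab := Hp 0 isT; rewrite /= in Hab; subst b.
rewrite ltnn eqxx /= in H.
apply: IH => // l Hl; exact: (Hp l.+1).
Qed.

Lemma lex_lt_nth s t i : size s = size t -> i < size s ->
  (forall l, l < i -> nth 0 s l = nth 0 t l) -> nth 0 s i < nth 0 t i ->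
  lexle s t && (s != t).
Proof.
elim: s t i => [|a s IH] [|b t] i //= [Hs] Hi Hp Hlt.
case: i Hi Hp Hlt => [|i] Hi Hp /= Hlt.
  by rewrite Hlt /=; apply/eqP => [[E _]]; rewrite E ltnn in Hlt.
have Hab := Hp 0 isT; rewrite /= in Hab; subst b.
have /andP[H1 H2] := IH t i Hs Hi (fun l Hl => Hp l.+1 Hl) Hlt.
rewrite ltnn eqxx H1 /=; apply/eqP => [[E]]; by rewrite E eqxx in H2.
Qed.

Lemma lex_first_diff s t : size s = size t -> lexle s t -> s != t ->
  exists d, [/\ d < size s, forall l, l < d -> nth 0 s l = nth 0 t l & nth 0 s d < nth 0 t d].
Proof.
elim: s t => [|a s IH] [|b t] //= [Hs] H Hne.
case/orP: H => [Hlt|/andP[/eqP Eab H]].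
  by exists 0; split => //.
subst b. have Hne' : s != t by apply: contraNneq Hne => ->.
have [d [Hd Hp Hl]] := IH t Hs H Hne'.
exists d.+1; split => //. by case=> [|l] //= Hl'; apply: Hp.
Qed.

Lemma lexle_total s t : size s = size t -> ~~ lexle s t -> lexle t s && (t != s).
Proof.
elim: s t => [|a s IH] [|b t] //= [Hs].
rewrite negb_or negb_and -leqNgt => /andP[Hba H].
have [Hlt|Eab] : b < a \/ b = a by lia.
  rewrite Hlt /=; apply/eqP => -[E _]; by rewrite E ltnn in Hlt.
subst b; rewrite eqxx /= in H *.
have /andP[H1 H2] := IH t Hs H. rewrite H1 ltnn /=.
apply/eqP => -[E]. by rewrite E eqxx in H2.
Qed.

Lemma lexle_antisym s t : size s = size t -> lexle s t -> lexle t s -> s = t.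
Proof.
elim: s t => [|a s IH] [|b t] //=; last move=> [Hs].
have [Hab|[Hab|Eab]] : a < b \/ b < a \/ a = b by lia.
- by move=> _ /orP[H|/andP[/eqP H _]]; lia.
- by move=> /orP[H|/andP[/eqP H _]]; lia.
- subst b; rewrite eqxx ltnn /= => H1 H2; by rewrite (IH t).
Qed.

Definition rpos n p i := if p + i < n then p + i else p + i - n.

Lemma rpos_lt n p i : p < n -> i < n -> rpos n p i < n.
Proof. rewrite /rpos; case: ifP; lia. Qed.

Lemma nth_rot0 s p i : p < size s -> i < size s ->
  nth 0 (rot p s) i = nth 0 s (rpos (size s) p i).
Proof.
move=> Hp Hi; rewrite /rot nth_cat size_drop /rpos.
case: ifP => H.
  rewrite nth_drop; have -> : p + i < size s by lia. done.
rewrite nth_take; last by lia.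
have -> : (p + i < size s) = false by lia.
congr nth; lia.
Qed.

Lemma nth_rotrev s p i : p < size s -> i < size s ->
  nth 0 (rot p (rev s)) i = nth 0 s ((size s).-1 - rpos (size s) p i).
Proof.
move=> Hp Hi; rewrite nth_rot0 ?size_rev //.
have H := rpos_lt Hp Hi.
rewrite nth_rev; last by [].
congr nth; lia.
Qed.

Lemma mem_rotations s p : p < size s -> rot p s \in rotations s.
Proof. by move=> Hp; apply: map_f; rewrite mem_iota. Qed.

Lemma rotations_mem s t : t \in rotations s -> exists2 p, p < size s & t = rot p s.
Proof. by case/mapP => p; rewrite mem_iota => Hp ->; exists p. Qed.

Lemma sym_rev s p : p < size s -> rot p (rev s) = s -> is_symmetric s.
Proof.
move=> Hp H. rewrite /is_symmetric.
have E : rev s = rotr p s by rewrite -{2}H rotK.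
rewrite E /rotr.
case: (ltnP 0 p) => Hp0.
  apply: mem_rotations; lia.
have -> : size s - p = size s by lia.
by rewrite rot_size -{1}(rot0 s); apply: mem_rotations; lia.
Qed.

Lemma sym_rev' s : is_symmetric s -> exists2 p, p < size s & rot p (rev s) = s.
Proof.
rewrite /is_symmetric => /rotations_mem [p Hp E].
have E2 : s = rotr p (rev s) by rewrite E rotK.
case: (ltnP 0 p) => Hp0.
  exists (size s - p); first lia.
  by rewrite [RHS]E2 /rotr size_rev.
exists 0; first lia.
have Ep : p = 0 by lia. subst p.
by rewrite E !rot0.
Qed.

Lemma inA_elim k n s : inA k n s ->
  [/\ size s = n, all (fun a => a < k) s,
      (forall p, p < n -> lexle s (rot p s)) &
      (forall p, p < n -> lexle s (rot p (rev s)) && (rot p (rev s) != s))].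
Proof.
case/and4P => /eqP Hs Ha /allP Hb Hsym; split => // p Hp.
  by apply: Hb; rewrite mem_cat mem_rotations // Hs.
rewrite Hb /=; last by rewrite mem_cat orbC mem_rotations // size_rev Hs.
apply/eqP => E. by rewrite (@sym_rev s p) in Hsym; rewrite ?Hs.
Qed.

Lemma inA_intro k n s : size s = n -> all (fun a => a < k) s ->
      (forall p, p < n -> lexle s (rot p s)) ->
      (forall p, p < n -> lexle s (rot p (rev s)) && (rot p (rev s) != s)) ->
      inA k n s.
Proof.
move=> Hs Ha H1 H2; apply/and4P; split => //; first by rewrite Hs.
  apply/allP => t; rewrite mem_cat => /orP[] /rotations_mem [p Hp ->].
    by apply: H1; rewrite -Hs.
  by case/andP: (H2 p ltac:(by rewrite -Hs -(size_rev s))).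
apply/negP => /sym_rev' [p Hp E].
by have /andP[_ /eqP] := H2 p ltac:(by rewrite -Hs).
Qed.

Lemma notinA k n s : size s = n -> all (fun a => a < k) s -> ~~ inA k n s ->
  exists2 p, p < n & (lexle (rot p s) s && (rot p s != s)) || lexle (rot p (rev s)) s.
Proof.
move=> Hs Ha HnA.
case: (boolP (has (fun p => (lexle (rot p s) s && (rot p s != s)) || lexle (rot p (rev s)) s) (iota 0 n))).
  by case/hasP => p; rewrite mem_iota => Hp H; exists p.
move/hasPn => Hn. exfalso; move/negP: HnA; apply.
apply: inA_intro => // p Hp; have := Hn p; rewrite mem_iota /= => /(_ Hp);
  rewrite negb_or => /andP[N1 N2].
- apply/negPn/negP => H; have := lexle_total _ H; rewrite size_rot => /(_ erefl).
  by rewrite (negbTE N1).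
- case: (boolP (lexle s (rot p (rev s)))) => H /=.
    by apply/eqP => E; rewrite E lexle_refl in N2.
  have := lexle_total _ H; rewrite size_rot size_rev => /(_ erefl) /andP[H' _].
  by rewrite H' in N2.
Qed.

Lemma PP s t L : size s = size t -> L <= size s -> lexle s t ->
  (forall i, i < L -> nth 0 t i <= nth 0 s i) ->
  forall i, i < L -> nth 0 s i = nth 0 t i.
Proof.
move=> Hs HL Hle Hpt.
elim/ltn_ind => i IH Hi.
have := lexle_nth Hs Hle (i:=i) (fun l Hl => IH l Hl ltac:(lia)) ltac:(lia).
have := Hpt i Hi; lia.
Qed.

Lemma PP2 a y0 y b m : size a = size y0 -> size y = size b -> size a = size b ->
  m <= size a -> lexle a y0 -> lexle y b ->
  (forall i, i < m -> (nth 0 b i <= nth 0 a i /\ nth 0 y0 i <= nth 0 y i) \/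
      (nth 0 y0 i = nth 0 a i /\ nth 0 y i = nth 0 b i)) ->
  forall i, i < m -> nth 0 y0 i = nth 0 a i /\ nth 0 y i = nth 0 b i.
Proof.
move=> S1 S2 S3 Hm H1 H2 Hpt.
elim/ltn_ind => i IH Hi.
case: (Hpt i Hi) => [_|//].
have A1 := lexle_nth S1 H1 (i:=i) (fun l Hl => esym (IH l Hl ltac:(lia)).1) ltac:(lia).
have A2 := lexle_nth S2 H2 (i:=i) (fun l Hl => (IH l Hl ltac:(lia)).2) ltac:(lia).
have := Hpt i Hi; lia.
Qed.

Lemma Zlex w y L : size w = size y -> L <= size w ->
  (forall i, i < L -> nth 0 w i = 0) ->
  (exists i, i < L /\ nth 0 y i != 0) -> lexle w y && (y != w).
Proof.
move=> Hs HL Hz [i1 [Hi1 Hy]].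
case: (boolP (lexle w y)) => H /=.
  by apply/eqP => E; rewrite E Hz in Hy.
have /andP[H' _] := lexle_total Hs H.
have := PP (esym Hs) ltac:(lia) H' (L:=L) => /(_ (fun i Hi => ltac:(rewrite Hz //))) /(_ i1 Hi1).
by rewrite Hz // => E; rewrite E in Hy.
Qed.

Lemma inA_zero k n w L : size w = n -> all (fun a => a < k) w -> 0 < L < n ->
  (forall i, i < L -> nth 0 w i = 0) ->
  (forall p, 0 < p < n -> exists i, i < L /\ nth 0 (rot p w) i != 0) ->
  (forall p, p < n -> p != n - L -> exists i, i < L /\ nth 0 (rot p (rev w)) i != 0) ->
  lexle w (rot (n - L) (rev w)) && (rot (n - L) (rev w) != w) -> inA k n w.
Proof.
move=> Hs Ha /andP[HL0 HL] Hz H1 H2 H3; apply: inA_intro => // p Hp.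
  case: (posnP p) => [->|Hp0]; first by rewrite rot0 lexle_refl.
  by case/andP: (Zlex (y := rot p w) (L:=L) ltac:(by rewrite size_rot) ltac:(lia) Hz (H1 p ltac:(lia))).
case: (eqVneq p (n - L)) => [->//|Hne].
apply: (Zlex (L:=L)) => //; first by rewrite size_rot size_rev.
  lia.
exact: H2.
Qed.

Definition upd (s : seq nat) j v := take j s ++ v :: drop j.+1 s.

Lemma size_upd s j v : j < size s -> size (upd s j v) = size s.
Proof. move=> Hj; rewrite /upd size_cat /= size_take size_drop Hj; lia. Qed.

Lemma nth_upd s j v i : j < size s -> nth 0 (upd s j v) i = if i == j then v else nth 0 s i.
Proof.
move=> Hj; rewrite /upd nth_cat size_take Hj.
case: (ltngtP i j) => H.
- by rewrite nth_take.
- have -> : i - j = (i - j.+1).+1 by lia.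
  by rewrite /= nth_drop; congr nth; lia.
- by rewrite H subnn.
Qed.

Definition img (rv : bool) p (s : seq nat) := if rv then rot p (rev s) else rot p s.
Definition g n (rv : bool) p i := if rv then n.-1 - rpos n p i else rpos n p i.

Lemma size_img rv p s : size (img rv p s) = size s.
Proof. by case: rv; rewrite /img size_rot ?size_rev. Qed.

Lemma nth_img rv p s i : p < size s -> i < size s ->
  nth 0 (img rv p s) i = nth 0 s (g (size s) rv p i).
Proof. by case: rv => Hp Hi; rewrite /img /g ?nth_rotrev ?nth_rot0. Qed.

Lemma g_lt n rv p i : p < n -> i < n -> g n rv p i < n.
Proof. move=> Hp Hi; have := rpos_lt Hp Hi; case: rv; rewrite /g; lia. Qed.

Lemma g_inj n rv p i i' : p < n -> i < n -> i' < n -> g n rv p i = g n rv p i' -> i = i'.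
Proof.
move=> Hp Hi Hi'; have := rpos_lt Hp Hi; have := rpos_lt Hp Hi'.
case: rv; rewrite /g /rpos; do 2 case: ifP; lia.
Qed.

Lemma g_surj n rv p j : p < n -> j < n -> exists2 q, q < n & g n rv p q = j.
Proof.
move=> Hp Hj; case: rv; rewrite /g /rpos.
  exists (if p <= n.-1 - j then n.-1 - j - p else n.-1 - j + n - p);
    case: (leqP p (n.-1 - j)) => H1; try lia; case: ifP; lia.
exists (if p <= j then j - p else j + n - p);
  case: (leqP p j) => H1; try lia; case: ifP; lia.
Qed.

Lemma INC k n a j : inA k n a -> j < n -> (nth 0 a j).+1 < k ->
  ~~ inA k n (upd a j (nth 0 a j).+1) ->
  exists rv p q, [/\ p < n, j < q < n, g n rv p q = j,
     (forall i, i < j -> nth 0 (img rv p a) i = nth 0 a i) &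
     lexle (img rv p (upd a j (nth 0 a j).+1)) (upd a j (nth 0 a j).+1)].
Proof.
move=> HA Hj Hk HnA.
have [Hs Ha Hrot Hrev] := inA_elim HA.
set b := upd a j _ in HnA *.
have Hsb : size b = n by rewrite size_upd Hs.
have Hab : all (fun x => x < k) b.
  apply/(all_nthP 0) => i; rewrite Hsb => Hi; rewrite nth_upd ?Hs //.
  case: eqP => // _. by apply: (all_nthP 0 Ha); rewrite Hs.
have [p Hp Hor] := notinA Hsb Hab HnA.
have [rv [Hle Hne]] : exists rv, lexle (img rv p b) b /\
   (if rv then img rv p a != a else img rv p b != b).
  case/orP: Hor => [/andP[H1 H2]|H]; first by exists false.
  exists true; split => //. by case/andP: (Hrev p Hp) => _ /=; rewrite /img.
set y0 := img rv p a; set y := img rv p b.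
have S0 : size y0 = n by rewrite size_img.
have S1 : size y = n by rewrite size_img.
have Hy0 : lexle a y0.
  rewrite /y0 /img; case: (rv); [by case/andP: (Hrev p Hp) | by apply: Hrot].
have Ny0 i : i < n -> nth 0 y0 i = nth 0 a (g n rv p i).
  by move=> Hi; rewrite nth_img ?Hs.
have Ny i : i < n -> nth 0 y i = if g n rv p i == j then (nth 0 a j).+1 else nth 0 y0 i.
  by move=> Hi; rewrite nth_img ?Hsb // nth_upd ?Hs // Ny0.
have Nb i : nth 0 b i = if i == j then (nth 0 a j).+1 else nth 0 a i.
  by rewrite nth_upd ?Hs.
have [q Hq Hgq] := g_surj rv Hp Hj.
have Hpre := PP2 (a:=a) (y0:=y0) (y:=y) (b:=b) (m := j) ltac:(by rewrite S0 Hs) ltac:(by rewrite S1 Hsb) ltac:(by rewrite Hsb Hs)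
  ltac:(lia) Hy0 Hle.
have Hpre' : forall i, i < j -> nth 0 y0 i = nth 0 a i /\ nth 0 y i = nth 0 b i.
  apply: Hpre => i Hi; left; rewrite Nb Ny; last by lia.
  rewrite (_ : (i == j) = false); last by apply/eqP; lia.
  split => //; case: eqP => // E; rewrite Ny0 ?E //; lia.
have Hqj : j <= q.
  case: (leqP j q) => // Hqj.
  have [E1 E2] := Hpre' q Hqj.
  move: E2; rewrite Ny // Hgq eqxx Nb (_ : (q == j) = false); last by apply/eqP; lia.
  rewrite -E1 Ny0 // Hgq; lia.
case: (eqVneq q j) => Eqj.
  subst q.
  have Hall := PP2 (a:=a) (y0:=y0) (y:=y) (b:=b) (m := n) ltac:(by rewrite S0 Hs) ltac:(by rewrite S1 Hsb) ltac:(by rewrite Hsb Hs)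
    ltac:(lia) Hy0 Hle.
  have Hall' : forall i, i < n -> nth 0 y0 i = nth 0 a i /\ nth 0 y i = nth 0 b i.
    apply: Hall => i Hi.
    case: (eqVneq i j) => [->|Hij]; first by right; rewrite Nb Ny // Hgq !eqxx Ny0 // Hgq.
    left; rewrite Nb Ny // (negbTE Hij).
    have -> : (g n rv p i == j) = false.
      apply/eqP => E; move/eqP: Hij; apply; apply: (g_inj (rv:=rv) (p:=p) Hp Hi Hj); by rewrite E.
    done.
  have E0 : y0 = a by apply: (@eq_from_nth _ 0); rewrite ?S0 ?Hs // => i Hi; case: (Hall' i Hi).
  have E1 : y = b by apply: (@eq_from_nth _ 0); rewrite ?S1 ?Hsb // => i Hi; case: (Hall' i Hi).
  move: Hne; rewrite -[img rv p a]/y0 -[img rv p b]/y E0 E1.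
  by case: (rv); rewrite eqxx.
exists rv, p, q; split => //.
- lia.
- by move=> i Hi; case: (Hpre' i Hi).
Qed.

Lemma foldl_min w l m : lexle w m -> size m = size w ->
  all (fun t => lexle w t && (size t == size w)) l -> (w \in l) || (m == w) ->
  foldl (fun m t => if lexle t m then t else m) m l = w.
Proof.
elim: l m => [|t l IH] m Hm Sm /=; first by move=> _ /eqP.
case/andP => /andP[Ht /eqP St] Hl; rewrite in_cons => Hw.
apply: IH => //.
- by case: ifP.
- by case: ifP.
case/orP: Hw => [/orP[/eqP Ewt|->//]|/eqP Emw]; apply/orP; right.
  by rewrite -Ewt Hm.
subst m; case: ifP => // H; apply/eqP; exact: lexle_antisym.
Qed.

Lemma neck_eq s w : w \in rotations s -> 0 < size s ->
  (forall p, p < size s -> lexle w (rot p s)) -> neck s = w.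
Proof.
move=> Hw Hs Hmin; rewrite /neck.
have [p0 Hp0 Ew] := rotations_mem Hw.
apply: foldl_min.
- by rewrite -(rot0 s); apply: Hmin.
- by rewrite Ew size_rot.
- apply/allP => t /rotations_mem [p Hp ->]; rewrite Hmin //= Ew !size_rot //.
- by rewrite Hw.
Qed.

Lemma ex_or_all (P : nat -> bool) m :
  (exists i, i < m /\ P i) \/ (forall i, i < m -> ~~ P i).
Proof.
case: (boolP (has P (iota 0 m))) => [/hasP [i]|/hasPn H].
  by rewrite mem_iota => Hi HP; left; exists i.
by right => i Hi; apply: H; rewrite mem_iota.
Qed.

Lemma window_rot k n a t p : inA k n a -> t < n -> (forall i, i < t -> nth 0 a i = 0) ->
  nth 0 a t != 0 -> p < n -> exists i, i <= t /\ nth 0 a (rpos n p i) != 0.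
Proof.
move=> HA Ht Hz Hnz Hp; have [Hs _ Hrot _] := inA_elim HA.
case: (ex_or_all (fun i => nth 0 a (rpos n p i) != 0) t.+1) => [[i [Hi H]]|H].
  by exists i.
exfalso.
have Hpt : forall i, i < t.+1 -> nth 0 (rot p a) i <= nth 0 a i.
  move=> i Hi; rewrite nth_rot0 ?Hs //; last by lia.
  by move: (H i Hi); rewrite negbK => /eqP ->.
have := PP (s:=a) (t:=rot p a) (L:=t.+1) ltac:(by rewrite size_rot) ltac:(lia) (Hrot p Hp) Hpt (ltnSn t).
rewrite nth_rot0 ?Hs //; try lia.
move: (H t (ltnSn t)); rewrite negbK => /eqP -> E.
by rewrite E in Hnz.
Qed.

Lemma window_rev k n a t p : inA k n a -> t < n -> (forall i, i < t -> nth 0 a i = 0) ->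
  nth 0 a t != 0 -> p < n -> exists i, i <= t /\ nth 0 a (n.-1 - rpos n p i) != 0.
Proof.
move=> HA Ht Hz Hnz Hp; have [Hs _ _ Hrev] := inA_elim HA.
case: (ex_or_all (fun i => nth 0 a (n.-1 - rpos n p i) != 0) t.+1) => [[i [Hi H]]|H].
  by exists i.
exfalso. case/andP: (Hrev p Hp) => Hle _.
have Hpt : forall i, i < t.+1 -> nth 0 (rot p (rev a)) i <= nth 0 a i.
  move=> i Hi; rewrite nth_rotrev ?Hs //; last by lia.
  by move: (H i Hi); rewrite negbK => /eqP ->.
have := PP (s:=a) (t:=rot p (rev a)) (L:=t.+1) ltac:(by rewrite size_rot size_rev) ltac:(lia) Hle Hpt (ltnSn t).
rewrite nth_rotrev ?Hs //; try lia.
move: (H t (ltnSn t)); rewrite negbK => /eqP -> E.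
by rewrite E in Hnz.
Qed.

Lemma entry_lt k n a i : inA k n a -> i < n -> nth 0 a i < k.
Proof. by case/inA_elim => Hs Ha _ _ Hi; apply: (all_nthP 0 Ha); rewrite Hs. Qed.

Lemma H2L k n a t : inA k n a -> 2 <= n -> t < n -> (forall i, i < t -> nth 0 a i = 0) ->
  nth 0 a t != 0 -> nth 0 a (n - 1) = k - 1 -> nth 0 a t < nth 0 a (n - 2) ->
  inA k n (LastSymbol k a).
Proof.
move=> HA Hn Ht Hz Hnz Hlast Hlt.
have [Hs Ha Hrot Hrev] := inA_elim HA.
have Hk2 := entry_lt HA (i := n - 2) ltac:(lia).
have Hk1 := entry_lt HA (i := n - 1) ltac:(lia).
have Ht3 : t.+2 < n.
  case: (ltnP t.+2 n) => // H; exfalso.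
  have [E|E] : t = n - 1 \/ t = n - 2 by lia.
  - by move: Hlt; rewrite E Hlast; lia.
  - by move: Hlt; rewrite E; lia.
have Hk : 0 < k by lia.
have -> : LastSymbol k a = neck (take (n - 1) a ++ [:: 0]).
  rewrite /LastSymbol Hs (_ : n.-1 = n - 1) ?Hlast; last by lia.
  by rewrite (_ : (k - 1).+1 = k) ?modnn //; lia.
set w := 0 :: take (n - 1) a.
have Sw : size w = n by rewrite /= size_takel; [lia | rewrite Hs; lia].
have Nw j : j < n -> nth 0 w j = if j == 0 then 0 else nth 0 a (j - 1).
  case: j => [|j] Hj //=; rewrite nth_take; last by lia.
  by rewrite subn1.
have Hw0 : forall i, i < t.+1 -> nth 0 w i = 0.
  move=> i Hi; rewrite Nw; last by lia.
  case: eqP => // Hi0; apply: Hz; lia.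
have Hnm2 : nth 0 a (n - 2) != 0 by apply/eqP => E; rewrite E in Hlt.
have Aw : inA k n w.
  apply: (inA_zero (L := t.+1)) => //.
  - apply/(all_nthP 0) => i; rewrite Sw => Hi; rewrite Nw //.
    by case: eqP => // _; apply: (entry_lt HA); lia.
  - lia.
  - move=> p /andP[Hp0 Hp].
    have [i1 [Hi1 Ha1]] := window_rot (p := p - 1) HA Ht Hz Hnz ltac:(lia).
    case: (eqVneq (rpos n p i1) 0) => Hr.
      exists (i1 - 1); split; first by move: Hr; rewrite /rpos; case: ifP; lia.
      rewrite nth_rot0 Sw //; last by lia.
      rewrite Nw; last by apply: rpos_lt; lia.
      have -> : rpos n p (i1 - 1) = n - 1 by move: Hr; rewrite /rpos; case: ifP; case: ifP; lia.
      rewrite (_ : (n - 1 == 0) = false); last by apply/eqP; lia.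
      by rewrite (_ : n - 1 - 1 = n - 2) //; lia.
    exists i1; split; first lia.
    rewrite nth_rot0 Sw //; last by lia.
    rewrite Nw; last by apply: rpos_lt; lia.
    rewrite (negbTE Hr).
    by rewrite (_ : rpos n p i1 - 1 = rpos n (p - 1) i1) //; move: Hr; rewrite /rpos;
      case: ifP; case: ifP; lia.
  - move=> p Hp Hpn.
    have [i1 [Hi1 Ha1]] := window_rev (p := if p.+1 < n then p.+1 else 0) HA Ht Hz Hnz
      ltac:(case: ifP; lia).
    case: (eqVneq (rpos n p i1) (n - 1)) => Hr.
      exists i1.+1; split.
        move: Hr Hpn; rewrite /rpos; case: ifP; lia.
      rewrite nth_rotrev Sw //; last by lia.
      have -> : rpos n p i1.+1 = 0 by move: Hr; rewrite /rpos; case: ifP; case: ifP; lia.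
      rewrite Nw; last by lia.
      rewrite (_ : (n.-1 - 0 == 0) = false); last by apply/eqP; lia.
      by rewrite (_ : n.-1 - 0 - 1 = n - 2) //; lia.
    exists i1; split; first lia.
    rewrite nth_rotrev Sw //; last by lia.
    have := rpos_lt Hp (ltac:(lia) : i1 < n) => Hrl.
    rewrite Nw; last by lia.
    rewrite (_ : (n.-1 - rpos n p i1 == 0) = false); last by apply/eqP; lia.
    move: Ha1; rewrite -(_ : n.-1 - rpos n p i1 - 1 = n.-1 - rpos n (if p.+1 < n then p.+1 else 0) i1) //.
    move: Hr Hrl; rewrite /rpos; case: (ltnP p.+1 n) => H1; do 2 case: ifP; lia.
  - rewrite eq_sym.
    have Sy : size w = size (rot (n - t.+1) (rev w)) by rewrite size_rot size_rev.
    have Hi : t.+1 < size w by rewrite Sw; lia.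
    have Hpre : forall l, l < t.+1 -> nth 0 w l = nth 0 (rot (n - t.+1) (rev w)) l.
      move=> l Hl; rewrite Hw0 // nth_rotrev Sw //; try lia.
      rewrite Nw; last by have := rpos_lt (ltac:(lia) : n - t.+1 < n) (ltac:(lia) : l < n); lia.
      case: eqP => // Hne; symmetry; apply: Hz; move: Hne; rewrite /rpos; case: ifP; lia.
    have Hl2 : nth 0 w t.+1 < nth 0 (rot (n - t.+1) (rev w)) t.+1.
      rewrite nth_rotrev Sw; try lia.
      rewrite (_ : rpos n (n - t.+1) t.+1 = 0); last by rewrite /rpos; case: ifP; lia.
      rewrite !Nw; try lia.
      rewrite (_ : (t.+1 == 0) = false) // (_ : (n.-1 - 0 == 0) = false); last by apply/eqP; lia.
      by rewrite (_ : n.-1 - 0 - 1 = n - 2); [rewrite subn1 | lia].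
    exact: lex_lt_nth Sy Hi Hpre Hl2.
have [_ _ Hwrot _] := inA_elim Aw.
have Es : take (n - 1) a ++ [:: 0] = rot 1 w by rewrite /rot /= drop0 take0.
suff -> : neck (take (n - 1) a ++ [:: 0]) = w by []. apply: neck_eq.
- rewrite Es; have Ew : rot (n - 1) (rot 1 w) = w.
    rewrite rot_add_mod ?Sw; try lia. rewrite (_ : n - 1 + 1 = n); last lia.
    by rewrite leqnn -Sw rot_size.
  rewrite -[X in X \in _]Ew.
  by apply: mem_rotations; rewrite size_rot Sw; lia.
- by rewrite size_cat size_take Hs /=; lia.
- move=> p; rewrite Es size_rot Sw => Hp.
  rewrite rot_add_mod ?Sw; try lia.
  case: ifP => H.
    case: (ltnP (p + 1) n) => H2; first by apply: Hwrot.
    by rewrite (_ : p + 1 = size w) ?rot_size ?lexle_refl //; lia.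
  lia.
Qed.

Lemma rpos0 n p i : p < n -> i < n -> rpos n p i = i -> p = 0.
Proof. rewrite /rpos; case: ifP; lia. Qed.

Lemma FNM_A k n a t : inA k n a -> t < n -> (forall i, i < t -> nth 0 a i = 0) ->
  2 <= nth 0 a t -> inA k n (upd a t (nth 0 a t).-1).
Proof.
move=> HA Ht Hz H2.
have [Hs Ha Hrot Hrev] := inA_elim HA.
set x := nth 0 a t in H2 *.
set b := upd a t x.-1.
have Sb : size b = n by rewrite size_upd Hs.
have Nb i : nth 0 b i = if i == t then x.-1 else nth 0 a i by rewrite nth_upd ?Hs.
have claim : forall rv p, p < n ->
    lexle b (img rv p b) && (rv ==> (img rv p b != b)).
  move=> rv p Hp.
  set y0 := img rv p a; set y := img rv p b.
  have S0 : size y0 = n by rewrite size_img.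
  have S1 : size y = n by rewrite size_img.
  have Hy0 : lexle a y0 && (rv ==> (y0 != a)).
    rewrite /y0 /img; case: (rv); [by apply: Hrev | by rewrite Hrot].
  case/andP: Hy0 => Hy0 Hy0n.
  have Ny0 i : i < n -> nth 0 y0 i = nth 0 a (g n rv p i).
    by move=> Hi; rewrite nth_img ?Hs.
  have Ny i : i < n -> nth 0 y i = if g n rv p i == t then x.-1 else nth 0 y0 i.
    by move=> Hi; rewrite nth_img ?Sb // Nb Ny0 //; apply: g_lt.
  case: (ex_or_all (fun i => nth 0 y i != 0) t) => [Hex|Hall].
    have := Zlex (w:=b) (y:=y) (L:=t) ltac:(by rewrite Sb S1) ltac:(lia).
    move=> /(_ (fun i Hi => ltac:(rewrite Nb (_ : (i == t) = false) ?Hz //; apply/eqP; lia))).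
    by move=> /(_ Hex) /andP[-> ->]; rewrite implybT.
  have Hg i : i < t -> g n rv p i != t /\ nth 0 y0 i = 0.
    move=> Hi; move: (Hall i Hi); rewrite negbK Ny; last by lia.
    by case: (eqVneq (g n rv p i) t) => [E|Hne] /eqP H; [lia | split].
  have Hyt : x <= nth 0 y0 t.
    apply: (lexle_nth (s:=a) (t:=y0) (i:=t)) => //; first by rewrite S0.
      by move=> l Hl; rewrite Hz // (Hg l Hl).2.
    by rewrite Hs.
  case: (eqVneq (g n rv p t) t) => Hgt; last first.
    have Sy : size b = size y by rewrite Sb S1.
    have Hi : t < size b by rewrite Sb.
    have Hpre : forall l, l < t -> nth 0 b l = nth 0 y l.
      move=> l Hl; rewrite Nb (_ : (l == t) = false); last by apply/eqP; lia.
      rewrite Hz // Ny; last by lia.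
      by case: (Hg l Hl) => /negbTE -> ->.
    have Hl2 : nth 0 b t < nth 0 y t.
      by rewrite Nb eqxx Ny // (negbTE Hgt); lia.
    by case/andP: (lex_lt_nth Sy Hi Hpre Hl2) => -> Hne; rewrite eq_sym Hne implybT.
  case: (boolP rv) => Hrv; last first.
    have Ep : p = 0 by move: Hgt; rewrite /g (negbTE Hrv); apply: rpos0.
    by rewrite /y /img (negbTE Hrv) Ep rot0 lexle_refl.
  rewrite Hrv /= in Hy0n *.
  have Ey0t : nth 0 y0 t = x by rewrite Ny0 // Hgt.
  have Eyt : nth 0 y t = x.-1 by rewrite Ny // Hgt eqxx.
  have Nyy i : i < n -> i != t -> nth 0 y i = nth 0 y0 i.
    move=> Hi Hit; rewrite Ny // (_ : (g n rv p i == t) = false) //.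
    apply/eqP => E; move/eqP: Hit; apply; apply: (g_inj (rv:=rv) (p:=p) Hp Hi Ht).
    by rewrite E Hgt.
  case: (boolP (lexle b y)) => Hby /=.
    apply/eqP => Eyb; move/eqP: Hy0n; apply.
    apply: (@eq_from_nth _ 0); rewrite ?S0 ?Hs // => i Hi.
    case: (eqVneq i t) => [->|Hit]; first by rewrite Ey0t.
    by rewrite -Nyy // Eyb Nb (negbTE Hit).
  exfalso.
  have /andP[Hyb Hne] := lexle_total (ltac:(by rewrite Sb S1) : size b = size y) Hby.
  have [d [Hd Hpre Hlt]] := lex_first_diff (ltac:(by rewrite Sb S1) : size y = size b) Hyb Hne.
  rewrite S1 in Hd.
  have Hdt : d != t by apply/eqP => E; move: Hlt; rewrite E Eyt Nb eqxx ltnn.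
  have Sya : size y0 = size a by rewrite S0 Hs.
  have Hd' : d < size y0 by rewrite S0.
  have Hpre' : forall l, l < d -> nth 0 y0 l = nth 0 a l.
    move=> l Hl; case: (eqVneq l t) => [->|Hlt']; first by rewrite Ey0t.
    by rewrite -Nyy; [rewrite Hpre // Nb (negbTE Hlt') | lia | done].
  have Hlt2 : nth 0 y0 d < nth 0 a d by move: Hlt; rewrite Nyy // Nb (negbTE Hdt).
  have /andP[H1 H3] := lex_lt_nth Sya Hd' Hpre' Hlt2.
  by move/eqP: Hy0n; apply; apply: lexle_antisym => //; rewrite Hs.
apply: inA_intro => //.
- apply/(all_nthP 0) => i; rewrite Sb => Hi; rewrite Nb.
  case: eqP => [E|_]; last by apply: (entry_lt HA).
  have := entry_lt HA Ht; rewrite -/x; lia.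
- by move=> p Hp; case/andP: (claim false p Hp).
- by move=> p Hp; case/andP: (claim true p Hp) => -> /= ->.
Qed.

Lemma iota_split3 n : 3 <= n -> iota 0 n = iota 0 (n - 3) ++ [:: n - 3; n - 2; n - 1].
Proof.
move=> Hn; rewrite -{1}(subnK Hn) iotaD /= add0n.
by congr (_ ++ [:: _; _; _]); lia.
Qed.

Lemma iota_split1 n : 1 <= n -> iota 0 n = iota 0 (n - 1) ++ [:: n - 1].
Proof.
move=> Hn; rewrite -{1}(subnK Hn) iotaD /= add0n //.
Qed.

Lemma iota_split2 n : 2 <= n -> iota 0 n = iota 0 (n - 2) ++ [:: n - 2; n - 1].
Proof.
move=> Hn; rewrite -{1}(subnK Hn) iotaD /= add0n.
by congr (_ ++ [:: _; _]); lia.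
Qed.

Lemma LNM_last k a : 0 < size a -> nth 0 a (size a - 1) != k - 1 ->
  LastNonMax k a = upd a (size a - 1) (nth 0 a (size a - 1)).+1.
Proof.
move=> Hn Hne; rewrite /LastNonMax /nonmax_idx iota_split1 // filter_cat /= Hne last_cat /=.
rewrite /upd (_ : size a - (size a - 1).+1 = 0) /=; last lia.
by rewrite drop_oversize //; lia.
Qed.

Lemma LNM_2 k a : 1 < size a -> nth 0 a (size a - 1) = k - 1 -> nth 0 a (size a - 2) != k - 1 ->
  LastNonMax k a = upd a (size a - 2) (nth 0 a (size a - 2)).+1.
Proof.
move=> Hn Hl Hne; rewrite /LastNonMax /nonmax_idx iota_split2 // filter_cat /= Hne Hl eqxx last_cat /=.
rewrite /upd (_ : size a - (size a - 2).+1 = 1) /=; last lia.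
rewrite (drop_nth 0); last lia.
rewrite (_ : (size a - 2).+1 = size a - 1); last lia.
by rewrite Hl drop_oversize //; lia.
Qed.

Lemma FNM_eq a : has (fun x => x != 0) a ->
  FirstNonMin a = upd a (find (fun x => x != 0) a) (nth 0 a (find (fun x => x != 0) a)).-1.
Proof.
move=> Hh; rewrite /FirstNonMin /upd; congr cat.
have Ht := Hh; rewrite has_find in Ht.
apply: (@eq_from_nth _ 0); first by rewrite size_nseq size_takel // ltnW.
move=> i; rewrite size_nseq => Hi; rewrite nth_nseq Hi nth_take //.
by have := before_find 0 Hi; move/negbFE/eqP.
Qed.

Lemma SLNM_eq a : 3 <= size a -> nth 0 a (size a - 1) = 2 -> nth 0 a (size a - 2) != 2 ->
  nth 0 a (size a - 3) != 2 ->
  SecondLastNonMax 3 a = upd a (size a - 3) (nth 0 a (size a - 3)).+1.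
Proof.
move=> Hn H1 H2 H3; rewrite /SecondLastNonMax /nonmax_idx iota_split3 // filter_cat /= H1 H2 H3 /=.
set xs := filter _ _.
rewrite size_cat /= (_ : size xs + 2 - 2 = size xs); last lia.
by rewrite nth_cat ltnn subnn.
Qed.

Lemma first_min k n a p : inA k n a -> p < n -> nth 0 a 0 <= nth 0 a p.
Proof.
move=> HA Hp; have [Hs _ Hrot _] := inA_elim HA.
have := lexle_nth (s:=a) (t:=rot p a) (i:=0) ltac:(by rewrite size_rot) (Hrot p Hp)
  (fun l Hl => ltac:(lia)) ltac:(lia).
by rewrite nth_rot0 ?Hs //; try lia; rewrite /rpos addn0 Hp.
Qed.

Lemma step1 k n a : inA k n a -> 1 <= n -> ~~ inA k n (LastNonMax k a) -> nth 0 a (n - 1) = k - 1.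
Proof.
move=> HA Hn HnA; have [Hs _ _ _] := inA_elim HA.
apply/eqP; apply/negPn/negP => Hne.
have Hlt := entry_lt HA (i := n - 1) ltac:(lia).
move: HnA; rewrite LNM_last ?Hs //; try lia; move=> HnA.
have [rv [p [q [_ Hq _ _ _]]]] := INC HA (j := n - 1) ltac:(lia) ltac:(lia) HnA.
lia.
Qed.

Lemma step4 k n a : inA k n a -> 3 <= n -> nth 0 a (n - 1) = k - 1 -> nth 0 a (n - 2) != k - 1 ->
  ~~ inA k n (LastNonMax k a) ->
  nth 0 a (n - 2) = k - 2 /\ (forall i, i < n - 2 -> nth 0 a i = nth 0 a (n - 3 - i)).
Proof.
move=> HA Hn Hl Hne HnA; have [Hs _ _ _] := inA_elim HA.
have Hlt := entry_lt HA (i := n - 2) ltac:(lia).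
move: HnA; rewrite LNM_2 ?Hs //; try lia; move=> HnA.
have [rv [p [q [Hp Hq Hg Hpre Hle]]]] := INC HA (j := n - 2) ltac:(lia) ltac:(lia) HnA.
have Eq : q = n - 1 by lia.
subst q.
case: rv Hg Hpre Hle => Hg Hpre Hle.
  have Ep : p = 2 by move: Hg; rewrite /g /rpos; case: ifP; lia.
  subst p.
  have Hpal : forall i, i < n - 2 -> nth 0 a i = nth 0 a (n - 3 - i).
    move=> i Hi; rewrite -Hpre // /img nth_rotrev Hs; try lia.
    by rewrite /rpos; case: ifP; try lia; move=> _; congr nth; lia.
  split => //.
  set b := upd a (n - 2) _ in Hle.
  have Sb : size b = n by rewrite size_upd Hs; lia.
  have Nb i : nth 0 b i = if i == n - 2 then (nth 0 a (n - 2)).+1 else nth 0 a i.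
    by rewrite nth_upd ?Hs //; lia.
  have Ny : forall l, l < n -> nth 0 (img true 2 b) l = nth 0 b (n.-1 - rpos n 2 l).
    by move=> l Hl0; rewrite /img nth_rotrev Sb; try lia.
  have Hpre2 : forall l, l < n - 2 -> nth 0 (img true 2 b) l = nth 0 b l.
    move=> l Hl0; rewrite Ny; try lia.
    have -> : rpos n 2 l = 2 + l by rewrite /rpos ifT //; lia.
    rewrite !Nb.
    rewrite (_ : (n.-1 - (2 + l) == n - 2) = false); last by apply/eqP; lia.
    rewrite (_ : (l == n - 2) = false); last by apply/eqP; lia.
    rewrite Hpal; last lia. congr nth; lia.
  have := lexle_nth (ltac:(by rewrite size_img) : size (img true 2 b) = size b) Hle Hpre2
    (ltac:(rewrite size_img Sb; lia) : n - 2 < size (img true 2 b)).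
  rewrite Ny; try lia.
  have -> : rpos n 2 (n - 2) = 0 by rewrite /rpos ifF; lia.
  rewrite !Nb eqxx (_ : (n.-1 - 0 == n - 2) = false); last by apply/eqP; lia.
  rewrite (_ : n.-1 - 0 = n - 1); last lia.
  rewrite Hl; lia.
exfalso.
have Ep : p = n - 1 by move: Hg; rewrite /g /rpos; case: ifP; lia.
subst p.
have := Hpre 0 ltac:(lia); rewrite /img nth_rot0 ?Hs; try lia.
have -> : rpos n (n - 1) 0 = n - 1 by rewrite /rpos ifT; lia.
rewrite Hl => E.
have := first_min HA (p := n - 2) ltac:(lia); rewrite -E; lia.
Qed.

Lemma is_rnk n a : size a = n -> 2 <= n -> nth 0 a (n - 2) = 1 -> nth 0 a (n - 1) = 2 ->
  (forall i, i < n - 2 -> nth 0 a i = 0) -> a = rnk n 3.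
Proof.
move=> Hs Hn H2 H1 Hz.
apply: (@eq_from_nth _ 0); first by rewrite Hs /rnk size_cat size_nseq /=; lia.
move=> i; rewrite Hs => Hi; rewrite /rnk nth_cat size_nseq.
case: ifP => Hi2; first by rewrite nth_nseq Hi2 Hz.
have [E|E] : i = n - 2 \/ i = n - 1 by lia.
- by rewrite E subnn H2.
- by rewrite E (_ : n - 1 - (n - 2) = 1) ?H1 //; lia.
Qed.

Lemma SLNM_A n a : inA 3 n a -> 4 <= n -> nth 0 a (n - 1) = 2 -> nth 0 a (n - 2) = 1 ->
  nth 0 a (n - 3) = 0 -> (forall i, i < n - 2 -> nth 0 a i = nth 0 a (n - 3 - i)) ->
  nth 0 a 1 < 2 -> a <> rnk n 3 -> inA 3 n (upd a (n - 3) 1).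
Proof.
move=> HA Hn H1 H2 H3 Hpal Ha1 Hr.
have [Hs _ _ _] := inA_elim HA.
apply/negPn/negP => HnA.
have HnA' : ~~ inA 3 n (upd a (n - 3) (nth 0 a (n - 3)).+1) by rewrite H3.
have [rv [p [q [Hp Hq Hg Hpre Hle]]]] := INC HA (j := n - 3) ltac:(lia) ltac:(rewrite H3; lia) HnA'.
have Hzero : (forall i, i < n - 2 -> nth 0 a i = 0) -> False.
  by move=> Hz; apply: Hr; apply: is_rnk => //; lia.
case: rv Hg Hpre {Hle} => Hg Hpre.
  have [Eq|Eq] : q = n - 2 \/ q = n - 1 by lia.
  - subst q.
    have [[Ep En]|Ep] : (p = 0 /\ n = 4) \/ p = 4 by move: Hg; rewrite /g /rpos; case: ifP; lia.
      subst p; apply: Hzero => i Hi.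
      have [->|->] : i = 0 \/ i = 1 by lia.
      + by rewrite Hpal ?subn0 //; lia.
      + by move: H3; rewrite (_ : n - 3 = 1) //; lia.
    subst p.
    have := Hpre (n - 4) ltac:(lia); rewrite /img nth_rotrev Hs; try lia.
    have -> : rpos n 4 (n - 4) = 0 by rewrite /rpos ifF; lia.
    rewrite (_ : n.-1 - 0 = n - 1); last lia.
    rewrite H1 Hpal; last lia.
    rewrite (_ : n - 3 - (n - 4) = 1); last lia.
    lia.
  - subst q.
    have Ep : p = 3 by move: Hg; rewrite /g /rpos; case: ifP; lia.
    subst p.
    have Hp2 : forall i, i < n - 3 -> nth 0 a i = nth 0 a (n - 4 - i).
      move=> i Hi; rewrite -Hpre // /img nth_rotrev Hs; try lia.
      have -> : rpos n 3 i = 3 + i by rewrite /rpos ifT; lia.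
      congr (nth _ _ _); lia.
    have Hstep : forall i, i < n - 3 -> nth 0 a i.+1 = nth 0 a i.
      move=> i Hi; rewrite Hpal; last lia.
      rewrite Hp2; last lia. congr (nth _ _ _); lia.
    apply: Hzero => i Hi.
    have : nth 0 a i = nth 0 a 0.
      elim: i Hi => [|i IH] Hi //; rewrite Hstep; last lia.
      by apply: IH; lia.
    move=> ->; rewrite Hpal; last lia.
    by rewrite subn0.
have [Eq|Eq] : q = n - 2 \/ q = n - 1 by lia.
- subst q.
  have Ep : p = n - 1 by move: Hg; rewrite /g /rpos; case: ifP; lia.
  subst p.
  have := Hpre 0 ltac:(lia); rewrite /img nth_rot0 Hs; try lia.
  have -> : rpos n (n - 1) 0 = n - 1 by rewrite /rpos ifT; lia.
  rewrite H1 Hpal; last lia.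
  by rewrite subn0 H3.
- subst q.
  have Ep : p = n - 2 by move: Hg; rewrite /g /rpos; case: ifP; lia.
  subst p.
  have := Hpre 0 ltac:(lia); rewrite /img nth_rot0 Hs; try lia.
  have -> : rpos n (n - 2) 0 = n - 2 by rewrite /rpos ifT; lia.
  rewrite H2 Hpal; last lia.
  by rewrite subn0 H3.
Qed.

Lemma tzero n a : inA 3 n a -> 4 <= n -> nth 0 a 0 = 1 -> nth 0 a (n - 1) = 2 ->
  nth 0 a (n - 2) = 1 -> nth 0 a (n - 3) = 1 -> inA 3 n (upd a 0 0).
Proof.
move=> HA Hn H0 H1 H2 H3.
have [Hs Ha Hrot _] := inA_elim HA.
have Hpos : forall i, i < n -> nth 0 a i != 0.
  by move=> i Hi; have := first_min HA Hi; rewrite H0; case: (nth 0 a i).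
have Ha1 : nth 0 a 1 <= 1.
  have := lexle_nth (s := a) (t := rot (n - 3) a) (i := 1) ltac:(by rewrite size_rot)
    (Hrot (n - 3) ltac:(lia)).
  rewrite nth_rot0 Hs; try lia.
  have -> : rpos n (n - 3) 1 = n - 2 by rewrite /rpos ifT; lia.
  rewrite H2; apply => //; last lia.
  move=> l Hl; have -> : l = 0 by lia.
  rewrite nth_rot0 Hs; try lia.
  have -> : rpos n (n - 3) 0 = n - 3 by rewrite /rpos ifT; lia.
  by rewrite H0 H3.
set w := upd a 0 0.
have Sw : size w = n by rewrite size_upd Hs; lia.
have Nw i : nth 0 w i = if i == 0 then 0 else nth 0 a i by rewrite nth_upd ?Hs; lia.
apply: (inA_zero (L := 1)) => //.
- apply/(all_nthP 0) => i; rewrite Sw => Hi; rewrite Nw.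
  by case: eqP => // _; apply: (entry_lt HA).
- lia.
- by move=> i Hi; rewrite Nw (_ : i = 0) //; lia.
- move=> p /andP[Hp0 Hp]; exists 0; split => //.
  rewrite nth_rot0 Sw //; try lia.
  have -> : rpos n p 0 = p by rewrite /rpos ifT; lia.
  by rewrite Nw (_ : (p == 0) = false); [apply: Hpos | apply/eqP; lia].
- move=> p Hp Hpn; exists 0; split => //.
  rewrite nth_rotrev Sw //; try lia.
  have -> : rpos n p 0 = p by rewrite /rpos ifT; lia.
  rewrite Nw (_ : (n.-1 - p == 0) = false); last by apply/eqP; lia.
  by apply: Hpos; lia.
- rewrite eq_sym.
  have Sy : size w = size (rot (n - 1) (rev w)) by rewrite size_rot size_rev.
  have Hi : 1 < size w by rewrite Sw; lia.
  have Hpre : forall l, l < 1 -> nth 0 w l = nth 0 (rot (n - 1) (rev w)) l.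
    move=> l Hl; have -> : l = 0 by lia.
    rewrite nth_rotrev Sw; try lia.
    have -> : rpos n (n - 1) 0 = n - 1 by rewrite /rpos ifT; lia.
    by rewrite !Nw eqxx (_ : n.-1 - (n - 1) = 0); [rewrite eqxx | lia].
  have Hl2 : nth 0 w 1 < nth 0 (rot (n - 1) (rev w)) 1.
    rewrite nth_rotrev Sw; try lia.
    have -> : rpos n (n - 1) 1 = 0 by rewrite /rpos ifF; lia.
    rewrite !Nw /= (_ : (n.-1 - 0 == 0) = false); last by apply/eqP; lia.
    rewrite (_ : n.-1 - 0 = n - 1); last lia.
    by rewrite H1; lia.
  exact: lex_lt_nth Sy Hi Hpre Hl2.
Qed.

Unset Implicit Arguments.

Theorem mainTheorem8 (n k : nat) (alpha : seq nat) :
  ((3 <= n /\ 4 <= k) \/ (4 <= n /\ k = 3)) ->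
  inA k n alpha -> alpha <> rnk n k ->
  ~~ inA k n (LastNonMax k alpha) ->
  ~~ inA k n (LastSymbol k alpha) ->
  (4 <= k -> inA k n (FirstNonMin alpha)) /\
  (k = 3 -> ~~ inA 3 n (FirstNonMin alpha) ->
     (exists gamma : seq nat, gamma = rev gamma /\
        alpha = 0 :: gamma ++ [:: 0; 1; 2]) /\
     inA 3 n (SecondLastNonMax 3 alpha)).
Proof.
move=> Hnk HA Hr H1 H2.
have Hn3 : 3 <= n by case: Hnk => [[]|[]]; lia.
have Hk3 : 3 <= k by case: Hnk => [[]|[]]; lia.
have [Hs Ha _ _] := inA_elim HA.
have Hl := step1 HA ltac:(lia) H1.
have Hhas : has (fun x => x != 0) alpha.
  apply/(has_nthP 0); exists (n - 1); first by rewrite Hs; lia.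
  by rewrite Hl; apply/eqP; lia.
set t := find (fun x => x != 0) alpha.
have Ht : t < n by rewrite -Hs -has_find.
have Hz : forall i, i < t -> nth 0 alpha i = 0.
  by move=> i Hi; have := before_find 0 Hi; move/negbFE/eqP.
have Hnz : nth 0 alpha t != 0 by apply: (nth_find 0 Hhas).
set x := nth 0 alpha t in Hnz.
have Hx : nth 0 alpha (n - 2) <= x.
  case: (leqP (nth 0 alpha (n - 2)) x) => // Hlt.
  exfalso; move/negP: H2; apply; apply: (H2L (t := t)) => //; lia.
have FNMeq : FirstNonMin alpha = upd alpha t x.-1 by rewrite FNM_eq.
have Dx : 2 <= x -> inA k n (FirstNonMin alpha) by move=> H; rewrite FNMeq; apply: FNM_A.
have S4 : nth 0 alpha (n - 2) != k - 1 ->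
    nth 0 alpha (n - 2) = k - 2 /\ (forall i, i < n - 2 -> nth 0 alpha i = nth 0 alpha (n - 3 - i)).
  by move=> H; apply: step4.
split.
  move=> Hk4; apply: Dx.
  case: (eqVneq (nth 0 alpha (n - 2)) (k - 1)) => E; first lia.
  have [E2 _] := S4 E; lia.
move=> Ek HnF; subst k.
have Hn4 : 4 <= n by case: Hnk => [[]|[]]; lia.
have Hx1 : x = 1.
  case: (leqP 2 x) => H; first by rewrite (Dx H) in HnF.
  by move: Hnz H; clear; case: x => [|[|]].
have [E2 Hpal] := S4 ltac:(apply/eqP; lia).
have E3 : nth 0 alpha (n - 3) = nth 0 alpha 0 by rewrite Hpal; [congr (nth _ _ _); lia | lia].
have Ht0 : 0 < t.
  case: (posnP t) => // Et; exfalso.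
  have X0 : nth 0 alpha 0 = 1 by move: Hx1; rewrite /x Et.
  move/negP: HnF; apply.
  rewrite FNMeq Hx1 Et /=.
  apply: tzero => //; by rewrite E3.
have A0 : nth 0 alpha 0 = 0 by apply: Hz.
have A3 : nth 0 alpha (n - 3) = 0 by rewrite E3.
have A1 : nth 0 alpha 1 < 2.
  case: (ltnP 1 t) => H; first by rewrite Hz.
  have Et : t = 1 by lia. by move: Hx1; rewrite /x Et => ->.
split; last first.
  have E2' : nth 0 alpha (n - 2) = 1 by rewrite E2.
  have Hl' : nth 0 alpha (n - 1) = 2 by rewrite Hl.
  have SE : SecondLastNonMax 3 alpha = upd alpha (n - 3) 1.
    have H3 : 3 <= size alpha by rewrite Hs.
    rewrite (SLNM_eq H3) Hs ?A3 ?Hl' ?E2' //.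
  rewrite SE; apply: SLNM_A => //.
exists (take (n - 4) (drop 1 alpha)).
have Sg : size (take (n - 4) (drop 1 alpha)) = n - 4 by rewrite size_takel // size_drop Hs; lia.
have Ng i : i < n - 4 -> nth 0 (take (n - 4) (drop 1 alpha)) i = nth 0 alpha i.+1.
  by move=> Hi; rewrite nth_take // nth_drop add1n.
split.
  apply: (@eq_from_nth _ 0); first by rewrite size_rev.
  move=> i; rewrite Sg => Hi; rewrite nth_rev Sg // !Ng; try lia.
  rewrite Hpal; last lia. congr (nth _ _ _); lia.
apply: (@eq_from_nth _ 0); first by rewrite /= size_cat Sg Hs /=; lia.
move=> i; rewrite Hs => Hi.
case: i Hi => [|i] Hi; first by rewrite A0.
rewrite /= nth_cat Sg.
case: ifP => H; first by rewrite Ng.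
have [E|[E|E]] : i = n - 4 \/ i = n - 3 \/ i = n - 2 by lia.
- have -> : i.+1 = n - 3 by lia.
  have -> : i - (n - 4) = 0 by lia.
  by rewrite A3.
- have -> : i.+1 = n - 2 by lia.
  have -> : i - (n - 4) = 1 by lia.
  by rewrite E2.
- have -> : i.+1 = n - 1 by lia.
  have -> : i - (n - 4) = 2 by lia.
  by rewrite Hl.
Qed.
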